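(* Let $G$ be a group generated by a finite symmetric set $X$ and hyperbolic relative to a finite collection of subgroups $\{H_\lambda\}_{\lambda\in\Lambda}$; let $\mathcal H=\bigsqcup_\lambda(H_\lambda\setminus\{1\})$ and $\Gamma=\Gamma(G,X\cup\mathcal H)$. Let $L>0$ be a constant such that for every cycle $q$ in $\Gamma$, every $\lambda\in\Lambda$ and every set of isolated $H_\lambda$-components $p_1,\dots,p_k$ of $q$, one has $\sum_{i=1}^k d_X((p_i)_-,(p_i)_+)\le L\,l(q)$. Let $s\ge 0$ and let $\epsilon\ge 0$ be a constant such that: whenever $p_1,p_2$ are geodesics in $\Gamma$ with $\max\{d_X((p_1)_-,(p_2)_-),d_X((p_1)_+,(p_2)_+)\}\le s$ and $c$ is a component of $p_1$ with $d_X(c_-,c_+)\ge\epsilon$, there is a component of $p_2$ connected to $c$. Now let $p_1=q_1e_1$ and $p_2=q_2e_2$ be geodesics in $\Gamma$ (with $e_1,e_2$ their last edges) such that $\max\{d_X((p_1)_-,(p_2)_-),d_X((p_1)_+,(p_2)_+)\}\le s$, and suppose that for some $\lambda\in\Lambda$, $e_1$ and $e_2$ are $H_\lambda$-components of $p_1$ and $p_2$ respectively with $d_X((e_i)_-,(e_i)_+)\ge\max\{\epsilon,2L(s+1)\}$ for $i=1,2$. Then $e_1$ and $e_2$ are connected.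
   Context: Relative hyperbolicity: with $F=(\ast_\lambda H_\lambda)\ast F(X)$ and $\varepsilon:F\to G$ the natural map, $G$ is hyperbolic relative to $\{H_\lambda\}$ if $\ker\varepsilon$ is the normal closure of a finite set $\mathcal R$ and there is $C>0$ such that every word $W$ over $X\cup\mathcal H$ representing $1$ in $G$ can be written in $F$ as a product of at most $C\|W\|$ conjugates of elements of $\mathcal R^{\pm1}$. The Cayley graph $\Gamma(G,\mathcal A)$ has vertex set $G$ and an edge labelled $a$ from $g$ to $ga$ for each $g\in G$, $a\in\mathcal A$; paths have origin $p_-$, terminus $p_+$, length $l(p)$ (number of edges). $d_X$ and $d_{X\cup\mathcal H}$ denote the word metrics for $X$ and $X\cup\mathcal H$. For a path $q$ in $\Gamma$, a subpath $p$ is an $H_\lambda$-component of $q$ if its label is a word in $H_\lambda\setminus\{1\}$ and $p$ is not contained in a longer subpath of $q$ with this property. Two components $p_1,p_2$ (of the same or different paths) are connected if they are $H_\lambda$-components for the same $\lambda$ and all their vertices lie in a common left coset $gH_\lambda$. An $H_\lambda$-component of $q$ is isolated if no other $H_\lambda$-component of $q$ is connected to it. *)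

(* Defs.v *)
From Stdlib Require Import Reals List Arith ClassicalEpsilon.
Import ListNotations.
Set Implicit Arguments.
Unset Strict Implicit.
Open Scope R_scope.

Record Group := {
  gcar :> Type;
  gmul : gcar -> gcar -> gcar;
  gone : gcar;
  ginv : gcar -> gcar;
  gmulA : forall x y z, gmul x (gmul y z) = gmul (gmul x y) z;
  gmul1 : forall x, gmul gone x = x;
  gmulV : forall x, gmul (ginv x) x = gone
}.
Arguments gone {_}.
Arguments gmul {_}.
Arguments ginv {_}.

Section Defs.
Variable G : Group.
Variable Lam : Type.

Definition is_subgroup (P : G -> Prop) : Prop :=
  P gone /\ (forall x y, P x -> P y -> P (gmul x y)) /\ (forall x, P x -> P (ginv x)).

Definition gprod (w : list G) : G := fold_right (fun a acc => gmul a acc) gone w.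

Definition finite_pred (A : Type) (P : A -> Prop) : Prop :=
  exists l : list A, forall a, P a -> In a l.
Definition symmetric_set (X : G -> Prop) : Prop := forall x, X x -> X (ginv x).
Definition generates (X : G -> Prop) : Prop :=
  forall g : G, exists w : list G, Forall X w /\ gprod w = g.

(** Letters of the alphabet X ⊔ ℋ, ℋ = ⊔_λ (H_λ \ {1}) (tagged by λ). *)
Inductive letter := XL (x : G) | HL (l : Lam) (h : G).

Definition valid_letter (X : G -> Prop) (H : Lam -> G -> Prop) (a : letter) : Prop :=
  match a with XL x => X x | HL l h => H l h /\ h <> gone end.
Definition eval_letter (a : letter) : G := match a with XL x => x | HL _ h => h end.
Definition eval_word (w : list letter) : G :=
  fold_right (fun a acc => gmul (eval_letter a) acc) gone w.

(** Letters for F = ( *_λ H_λ ) * F(X): basis letters of F(X) with exponent ±1,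
    and elements of the H_λ (tagged by λ). *)
Inductive fletter := FX (x : G) (pos : bool) | FH (l : Lam) (h : G).

Definition valid_fletter (X : G -> Prop) (H : Lam -> G -> Prop) (a : fletter) : Prop :=
  match a with FX x _ => X x | FH l h => H l h end.
Definition feval_letter (a : fletter) : G :=
  match a with FX x true => x | FX x false => ginv x | FH _ h => h end.
Definition feval (w : list fletter) : G :=
  fold_right (fun a acc => gmul (feval_letter a) acc) gone w.

Definition finv_letter (a : fletter) : fletter :=
  match a with FX x b => FX x (negb b) | FH l h => FH l (ginv h) end.
Definition finv (w : list fletter) : list fletter := rev (map finv_letter w).

(** Equality in the free product F, as words modulo the defining moves. *)
Inductive feq : list fletter -> list fletter -> Prop :=
| feq_refl w : feq w w
| feq_sym u v : feq u v -> feq v u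
| feq_trans u v w : feq u v -> feq v w -> feq u w
| feq_ctx a b u v : feq u v -> feq (a ++ u ++ b) (a ++ v ++ b)
| feq_free x bo : feq [FX x bo; FX x (negb bo)] []
| feq_merge l h h' : feq [FH l h; FH l h'] [FH l (gmul h h')]
| feq_unit l : feq [FH l gone] [].

Definition embed_letter (a : letter) : fletter :=
  match a with XL x => FX x true | HL l h => FH l h end.

Definition conj_word (c : list fletter * list fletter * bool) : list fletter :=
  let '(f, r, b) := c in f ++ (if b then r else finv r) ++ finv f.
Definition prod_conj (cs : list (list fletter * list fletter * bool)) : list fletter :=
  flat_map conj_word cs.

Definition conjs_ok X H (Rel : list (list fletter))
  (cs : list (list fletter * list fletter * bool)) : Prop :=
  forall f r b, In (f, r, b) cs -> In r Rel /\ Forall (valid_fletter X H) f.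

(** Osin's definition of relative hyperbolicity (finite relative presentation
    with linear relative Dehn function). *)
Definition rel_hyperbolic (X : G -> Prop) (H : Lam -> G -> Prop) : Prop :=
  exists Rel : list (list fletter),
    (forall r, In r Rel -> Forall (valid_fletter X H) r /\ feval r = gone) /\
    (forall w, Forall (valid_fletter X H) w -> feval w = gone ->
       exists cs, conjs_ok X H Rel cs /\ feq w (prod_conj cs)) /\
    (exists C : R, 0 < C /\
       forall W : list letter, Forall (valid_letter X H) W -> eval_word W = gone ->
         exists cs, conjs_ok X H Rel cs /\
           INR (length cs) <= C * INR (length W) /\
           feq (map embed_letter W) (prod_conj cs)).

Definition dX_le (X : G -> Prop) (a b : G) (n : nat) : Prop :=
  exists w : list G, Forall X w /\ (length w <= n)%nat /\ gmul a (gprod w) = b.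
Definition is_dX X a b n : Prop :=
  dX_le X a b n /\ forall m, dX_le X a b m -> (n <= m)%nat.
Definition dX (X : G -> Prop) (a b : G) : nat :=
  match excluded_middle_informative (exists n, is_dX X a b n) with
  | left h => proj1_sig (constructive_indefinite_description _ h)
  | right _ => 0%nat
  end.

(** Paths in Γ(G, X ∪ ℋ): start vertex and list of edge labels. *)
Record path := { pstart : G; plab : list letter }.

Definition plen (p : path) : nat := length (plab p).
Definition vertex (p : path) (k : nat) : G := gmul (pstart p) (eval_word (firstn k (plab p))).
Definition pend (p : path) : G := vertex p (plen p).
Definition valid_path X H (p : path) : Prop := Forall (valid_letter X H) (plab p).
Definition is_cycle X H (p : path) : Prop := valid_path X H p /\ pend p = pstart p.
Definition geodesic X H (p : path) : Prop :=
  valid_path X H p /\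
  forall p', valid_path X H p' -> pstart p' = pstart p -> pend p' = pend p ->
    (plen p <= plen p')%nat.

Definition has_HL (p : path) (l : Lam) (k : nat) : Prop :=
  exists h, nth_error (plab p) k = Some (HL l h).

Definition is_component (p : path) (l : Lam) (i j : nat) : Prop :=
  (i < j)%nat /\ (j <= plen p)%nat /\
  (forall k, (i <= k < j)%nat -> has_HL p l k) /\
  (i = 0%nat \/ ~ has_HL p l (i - 1)) /\
  ~ has_HL p l j.

(** Connected H_λ-components: all vertices in a common left coset gH_λ. *)
Definition connected (H : Lam -> G -> Prop) (l : Lam)
  (p1 : path) (i1 j1 : nat) (p2 : path) (i2 j2 : nat) : Prop :=
  is_component p1 l i1 j1 /\ is_component p2 l i2 j2 /\
  exists g : G,
    (forall k, (i1 <= k <= j1)%nat -> H l (gmul (ginv g) (vertex p1 k))) /\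
    (forall k, (i2 <= k <= j2)%nat -> H l (gmul (ginv g) (vertex p2 k))).

Definition isolated H (l : Lam) (q : path) (i j : nat) : Prop :=
  is_component q l i j /\
  forall i' j', is_component q l i' j' -> (i', j') <> (i, j) ->
    ~ connected H l q i j q i' j'.

Definition sum_dX X (q : path) (cs : list (nat * nat)) : R :=
  fold_right (fun c acc => INR (dX X (vertex q (fst c)) (vertex q (snd c))) + acc) 0 cs.

End Defs.

(* Main.v *)
Require Import Defs.
From Stdlib Require Import Reals List Arith Lia Lra Classical ClassicalEpsilon.
Import ListNotations.
Open Scope R_scope.

Section GL.
Context {G : Group}.
Lemma g_mulV (x : G) : gmul x (ginv x) = gone.
Proof.
  rewrite <- (gmul1 (gmul x (ginv x))).
  rewrite <- (gmulV (ginv x)) at 1.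
  rewrite <- gmulA. rewrite (gmulA (ginv x) x (ginv x)). rewrite gmulV, gmul1.
  apply gmulV.
Qed.
Lemma g_mul1r (x : G) : gmul x gone = x.
Proof. rewrite <- (gmulV x), gmulA, g_mulV, gmul1. reflexivity. Qed.
Lemma g_cancel_l (a x y : G) : gmul a x = gmul a y -> x = y.
Proof. intro E. rewrite <- (gmul1 x), <- (gmul1 y), <- (gmulV a), <- !gmulA, E. reflexivity. Qed.
Lemma g_invinv (x : G) : ginv (ginv x) = x.
Proof. apply (g_cancel_l (ginv x)). rewrite g_mulV, gmulV. reflexivity. Qed.
Lemma g_invM (x y : G) : ginv (gmul x y) = gmul (ginv y) (ginv x).
Proof. apply (g_cancel_l (gmul x y)). rewrite g_mulV, <- gmulA, (gmulA y), g_mulV, gmul1, g_mulV. reflexivity. Qed.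
Lemma g_inv1 : ginv (@gone G) = gone.
Proof. rewrite <- (gmul1 (ginv gone)). apply g_mulV. Qed.
Lemma g_solve (a x b : G) : gmul a x = b -> x = gmul (ginv a) b.
Proof. intro E. rewrite <- E, gmulA, gmulV, gmul1. reflexivity. Qed.
End GL.

Definition co {G : Group} (P : G -> Prop) (a b : G) := P (gmul (ginv a) b).
Section Co.
Context {G : Group} (P : G -> Prop) (HP : is_subgroup P).
Lemma co_refl a : co P a a.
Proof. unfold co. rewrite gmulV. apply HP. Qed.
Lemma co_sym a b : co P a b -> co P b a.
Proof. unfold co. intro h. destruct HP as [_ [_ Hi]]. apply Hi in h.
  rewrite g_invM, g_invinv in h. exact h. Qed.
Lemma co_trans a b c : co P a b -> co P b c -> co P a c.
Proof. unfold co. intros h1 h2. destruct HP as [_ [Hm _]].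
  pose proof (Hm _ _ h1 h2) as h. rewrite <- gmulA, (gmulA b), g_mulV, gmul1 in h. exact h. Qed.
End Co.

Lemma min_exists (P : nat -> Prop) : (exists n, P n) -> exists n, P n /\ forall m, P m -> (n <= m)%nat.
Proof.
  intros [n Hn]. revert Hn. induction n as [n IH] using lt_wf_ind. intro Hn.
  destruct (classic (exists m, (m < n)%nat /\ P m)) as [[m [Hm1 Hm2]]|Hno].
  - exact (IH m Hm1 Hm2).
  - exists n. split; [exact Hn|]. intros m Hm. destruct (le_lt_dec n m); [assumption|].
    exfalso. apply Hno. eauto.
Qed.

Section DX.
Context {G : Group} (X : G -> Prop) (Hgen : generates X).
Lemma dX_spec a b : exists w, Forall X w /\ length w = dX X a b /\ gmul a (gprod w) = b.
Proof.
  assert (Hex : exists n, is_dX X a b n).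
  { destruct (Hgen (gmul (ginv a) b)) as [w [Hw1 Hw2]].
    destruct (min_exists (dX_le X a b)) as [n [Hn1 Hn2]].
    - exists (length w). exists w. repeat split; auto. rewrite Hw2, gmulA, g_mulV, gmul1. reflexivity.
    - exists n. split; auto. }
  unfold dX. destruct (excluded_middle_informative _) as [h|h]; [|contradiction].
  destruct (constructive_indefinite_description _ h) as [n [[w [H1 [H2 H3]]] Hmin]]. simpl.
  exists w. repeat split; auto. apply Nat.le_antisymm; auto. apply Hmin. exists w; auto.
Qed.
Lemma dX_min a b n : dX_le X a b n -> (dX X a b <= n)%nat.
Proof.
  intro Hn.
  assert (Hex : exists n, is_dX X a b n).
  { destruct (min_exists (dX_le X a b)) as [m [Hm1 Hm2]]; eauto. exists m. split; auto. }
  unfold dX. destruct (excluded_middle_informative _) as [h|h]; [|contradiction].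
  destruct (constructive_indefinite_description _ h) as [m [Hm0 Hmin]]. simpl. auto.
Qed.
End DX.

Lemma gprod_app {G : Group} (u v : list G) : gprod (u ++ v) = gmul (gprod u) (gprod v).
Proof. induction u; simpl. rewrite gmul1; auto. rewrite IHu, gmulA; auto. Qed.

Lemma dX_sym {G : Group} (X : G -> Prop) (Hsym : symmetric_set X) (Hgen : generates X) a b :
  (dX X b a <= dX X a b)%nat.
Proof.
  destruct (dX_spec X Hgen a b) as [w [H1 [H2 H3]]].
  apply dX_min. exists (rev (map ginv w)). repeat split.
  - apply Forall_rev. apply Forall_map. eapply Forall_impl; [|exact H1]. exact Hsym.
  - rewrite length_rev, length_map; lia.
  - assert (E : gprod (rev (map ginv w)) = ginv (gprod w)).
    { clear H1 H2 H3. induction w as [|x w IH]; simpl. symmetry; apply g_inv1.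
      rewrite gprod_app, IH. simpl. rewrite g_mul1r, g_invM. reflexivity. }
    rewrite E, <- H3, <- gmulA, g_mulV, g_mul1r. reflexivity.
Qed.
Close Scope R_scope.

Section P.
Context {G : Group} {Lam : Type}.

Lemma eval_word_app (u v : list (letter G Lam)) : eval_word (u ++ v) = gmul (eval_word u) (eval_word v).
Proof. induction u; simpl. rewrite gmul1; auto. rewrite IHu, gmulA; auto. Qed.

Lemma eval_XL (w : list G) : eval_word (map (XL Lam) w) = gprod w.
Proof. induction w; simpl; congruence. Qed.

Lemma firstn_add {A} (j k : nat) (l : list A) : firstn (j + k) l = firstn j l ++ firstn k (skipn j l).
Proof. revert l; induction j; intros l; simpl. auto. destruct l; simpl. destruct k; auto. f_equal; auto. Qed.

Lemma firstn_S_nth {A} (k : nat) (l : list A) a : nth_error l k = Some a -> firstn (S k) l = firstn k l ++ [a].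
Proof. revert l; induction k; intros l; destruct l; simpl; try discriminate. intro E; inversion E; auto.
  intro E. f_equal. apply IHk; auto. Qed.

Lemma vertex0 (p : path G Lam) : vertex p 0 = pstart p.
Proof. unfold vertex. simpl. apply g_mul1r. Qed.

Lemma pend_eq (p : path G Lam) : pend p = gmul (pstart p) (eval_word (plab p)).
Proof. unfold pend, vertex, plen. rewrite firstn_all. auto. Qed.

Lemma vertex_S (p : path G Lam) k a : nth_error (plab p) k = Some a ->
  vertex p (S k) = gmul (vertex p k) (eval_letter a).
Proof. intro E. unfold vertex. rewrite (firstn_S_nth _ _ _ E), eval_word_app. simpl.
  rewrite g_mul1r, gmulA. auto. Qed.

Lemma vertex_app (s : G) (u v : list (letter G Lam)) k :
  vertex {| pstart := s; plab := u ++ v |} (length u + k) = vertex {| pstart := gmul s (eval_word u); plab := v |} k.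
Proof. unfold vertex; simpl. rewrite firstn_app_2, eval_word_app, gmulA. auto. Qed.

Lemma vertex_skip (p : path G Lam) j k :
  vertex p (j + k) = vertex {| pstart := vertex p j; plab := skipn j (plab p) |} k.
Proof. unfold vertex at 1 2; simpl. rewrite firstn_add, eval_word_app, gmulA. auto. Qed.

Lemma pend_split (p : path G Lam) u : pend p = gmul (vertex p u) (eval_word (skipn u (plab p))).
Proof. rewrite pend_eq. unfold vertex. rewrite <- gmulA, <- eval_word_app, firstn_skipn. auto. Qed.

Definition hedge (l : Lam) (h : G) : list (letter G Lam) :=
  if excluded_middle_informative (h = gone) then [] else [HL l h].

Lemma hedge_len l h : (length (hedge l h) <= 1)%nat.
Proof. unfold hedge. destruct (excluded_middle_informative _); simpl; lia. Qed.
Lemma hedge_eval l h : eval_word (hedge l h) = h.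
Proof. unfold hedge. destruct (excluded_middle_informative _); simpl; auto. rewrite g_mul1r; auto. Qed.
Lemma hedge_valid X (H : Lam -> G -> Prop) l h : H l h -> Forall (valid_letter X H) (hedge l h).
Proof. unfold hedge. intro. destruct (excluded_middle_informative _); constructor; simpl; auto. Qed.

Lemma Forall_firstn' {A} (P : A -> Prop) n l : Forall P l -> Forall P (firstn n l).
Proof. revert l; induction n; intros l Hl; simpl. constructor. destruct l; simpl; auto. inversion Hl; subst. constructor; auto. Qed.
Lemma Forall_skipn' {A} (P : A -> Prop) n l : Forall P l -> Forall P (skipn n l).
Proof. revert l; induction n; intros l Hl; simpl. auto. destruct l; simpl; auto. inversion Hl; subst. auto. Qed.

Lemma geo_suffix X H (p : path G Lam) t (u : list (letter G Lam)) :
  geodesic X H p -> (t <= plen p)%nat -> Forall (valid_letter X H) u ->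
  gmul (vertex p t) (eval_word u) = pend p -> (plen p - t <= length u)%nat.
Proof.
  intros [Hv Hg] Ht Hu E.
  pose (p' := {| pstart := pstart p; plab := firstn t (plab p) ++ u |}).
  assert (L := Hg p'). unfold plen in *. simpl in L. rewrite length_app, length_firstn in L.
  enough ((length (plab p) <= Nat.min t (length (plab p)) + length u)%nat) by lia.
  apply L; auto.
  - unfold valid_path; simpl. apply Forall_app; split; auto. apply Forall_firstn'; auto.
  - rewrite <- E, pend_eq; simpl. rewrite eval_word_app, gmulA. auto.
Qed.

Lemma geo_coset X (H : Lam -> G -> Prop) (p : path G Lam) l t u :
  is_subgroup (H l) -> geodesic X H p -> (t + 2 <= u)%nat -> (u <= plen p)%nat ->
  H l (gmul (ginv (vertex p t)) (vertex p u)) -> False.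
Proof.
  intros Hs [Hv Hg] Htu Hu Hh.
  set (h := gmul (ginv (vertex p t)) (vertex p u)) in *.
  pose (p' := {| pstart := pstart p; plab := firstn t (plab p) ++ hedge l h ++ skipn u (plab p) |}).
  assert (L := Hg p'). unfold plen in *. simpl in L.
  rewrite !length_app, length_firstn, length_skipn in L.
  pose proof (hedge_len l h).
  enough ((length (plab p) <= Nat.min t (length (plab p)) + (length (hedge l h) + (length (plab p) - u)))%nat) by lia.
  apply L; auto.
  - unfold valid_path; simpl. apply Forall_app; split. apply Forall_firstn'; auto.
    apply Forall_app; split. apply hedge_valid; auto. apply Forall_skipn'; auto.
  - rewrite (pend_split p u), pend_eq; simpl. rewrite !eval_word_app, hedge_eval.
    rewrite !gmulA. f_equal. fold (vertex p t). unfold h. rewrite gmulA, g_mulV, gmul1. auto.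
Qed.
End P.
Open Scope R_scope.


Lemma co_edge {G : Group} {Lam : Type} (H : Lam -> G -> Prop) (X : G -> Prop) (p : path G Lam) l k :
  valid_path X H p -> has_HL p l k -> co (H l) (vertex p k) (vertex p (S k)).
Proof.
  intros Hv [h Hh]. rewrite (vertex_S _ _ _ Hh). simpl. unfold co.
  rewrite gmulA, gmulV, gmul1. unfold valid_path in Hv.
  apply nth_error_In in Hh. rewrite Forall_forall in Hv. apply Hv in Hh. simpl in Hh. tauto.
Qed.

Theorem lemma3p1
  (G : Group) (X : G -> Prop) (Lam : Type) (H : Lam -> G -> Prop)
  (HXfin : finite_pred X) (HXsym : symmetric_set X) (HXgen : generates X)
  (HLfin : finite_pred (fun _ : Lam => True))
  (HHsub : forall l, is_subgroup (H l))
  (Hrh : rel_hyperbolic X H)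
  (L s eps : R) (HL0 : 0 < L) (Hs0 : 0 <= s) (Heps0 : 0 <= eps)
  (HLprop : forall (q : path G Lam) (l : Lam) (cs : list (nat * nat)),
      is_cycle X H q -> NoDup cs ->
      (forall c, In c cs -> isolated H l q (fst c) (snd c)) ->
      sum_dX X q cs <= L * INR (plen q))
  (Heprop : forall (p1 p2 : path G Lam),
      geodesic X H p1 -> geodesic X H p2 ->
      INR (dX X (pstart p1) (pstart p2)) <= s ->
      INR (dX X (pend p1) (pend p2)) <= s ->
      forall (l : Lam) (i j : nat), is_component p1 l i j ->
      eps <= INR (dX X (vertex p1 i) (vertex p1 j)) ->
      exists i' j', connected H l p1 i j p2 i' j')
  (p1 p2 : path G Lam) (l : Lam) :
  geodesic X H p1 -> geodesic X H p2 ->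
  INR (dX X (pstart p1) (pstart p2)) <= s ->
  INR (dX X (pend p1) (pend p2)) <= s ->
  is_component p1 l (plen p1 - 1) (plen p1) ->
  is_component p2 l (plen p2 - 1) (plen p2) ->
  Rmax eps (2 * L * (s + 1)) <= INR (dX X (vertex p1 (plen p1 - 1)) (vertex p1 (plen p1))) ->
  Rmax eps (2 * L * (s + 1)) <= INR (dX X (vertex p2 (plen p2 - 1)) (vertex p2 (plen p2))) ->
  connected H l p1 (plen p1 - 1) (plen p1) p2 (plen p2 - 1) (plen p2).
Proof.
  intros Hg1 Hg2 Hs1 Hs2 Hc1 Hc2 Hd1 Hd2.
  destruct (classic (connected H l p1 (plen p1 - 1) (plen p1) p2 (plen p2 - 1) (plen p2))) as [Hok|Hnot];
    [exact Hok|exfalso].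
  assert (Hsub := HHsub l).
  destruct (Heprop p1 p2 Hg1 Hg2 Hs1 Hs2 l _ _ Hc1) as [i' [j' Hcon]].
  { eapply Rle_trans; [apply Rmax_l|exact Hd1]. }
  pose proof Hcon as Hcon'. destruct Hcon' as [_ [Hcc [g [Hgk1 Hgk2]]]].
  destruct Hcc as [Hij [Hjn [Hall [Hi0 Hnj]]]].
  pose proof Hc2 as Hc2'. destruct Hc2' as [Hn2a [_ [Hall2 [Hpre2 Hnot2]]]].
  pose proof Hc1 as Hc1'. destruct Hc1' as [Hn1a [_ [Hall1 _]]].
  set (n1 := plen p1) in *. set (n2 := plen p2) in *.
  assert (HL2 : has_HL p2 l (n2 - 1)) by (apply Hall2; lia).
  assert (Hj : (j' <= n2 - 2)%nat).
  { assert (j' <> (n2 - 1)%nat) by (intro E; rewrite E in Hnj; contradiction).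
    assert (j' <> n2).
    { intro E. subst j'. destruct (Nat.eq_dec i' (n2 - 1)) as [E|E].
      - subst i'. contradiction.
      - destruct Hpre2 as [E2|E2]; [lia|]. apply E2. apply Hall. lia. }
    lia. }
  assert (Hv2 : valid_path X H p2) by apply Hg2.
  assert (Hv1 : valid_path X H p1) by apply Hg1.
  set (P := pend p1) in *.
  assert (HgP : co (H l) g P) by (apply Hgk1; lia).
  assert (Hgi : co (H l) g (vertex p2 i')) by (apply Hgk2; lia).
  assert (Hgj : co (H l) g (vertex p2 j')) by (apply Hgk2; lia).
  destruct (dX_spec X HXgen P (pend p2)) as [w1 [Hw1a [Hw1b Hw1c]]].
  set (d := dX X P (pend p2)) in *.
  assert (HA : (n2 - i' <= 1 + d)%nat).
  { set (u := hedge l (gmul (ginv (vertex p2 i')) P) ++ map (XL Lam) w1).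
    assert (Hl : (length u <= 1 + d)%nat).
    { unfold u. rewrite length_app, length_map. pose proof (hedge_len l (gmul (ginv (vertex p2 i')) P)). lia. }
    enough (n2 - i' <= length u)%nat by lia.
    apply (geo_suffix X H); auto; try lia.
    - unfold u. apply Forall_app. split.
      + apply hedge_valid. apply (co_trans _ Hsub _ g); [apply co_sym|]; auto.
      + apply Forall_map. eapply Forall_impl; [|exact Hw1a]. simpl; auto.
    - unfold u. rewrite eval_word_app, hedge_eval, eval_XL, gmulA, gmulA, g_mulV, gmul1. exact Hw1c. }
  destruct (dX_spec X HXgen (pend p2) P) as [w2 [Hw2a [Hw2b Hw2c]]].
  pose proof (dX_sym X HXsym HXgen P (pend p2)) as Hsym. fold d in Hsym.
  set (E := hedge l (gmul (ginv P) (vertex p2 j'))).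
  assert (HE1 : (length E <= 1)%nat) by apply hedge_len.
  set (seg := skipn j' (plab p2)).
  assert (Hseg : length seg = (n2 - j')%nat) by (unfold seg; rewrite length_skipn; reflexivity).
  set (W := map (XL Lam) w2).
  set (q := {| pstart := P; plab := E ++ seg ++ W |}).
  assert (HPE : gmul P (eval_word E) = vertex p2 j').
  { unfold E. rewrite hedge_eval, gmulA, g_mulV, gmul1. reflexivity. }
  assert (Hvq : forall k, (k <= n2 - j')%nat -> vertex q (length E + k) = vertex p2 (j' + k)).
  { intros k Hk. unfold q. rewrite vertex_app, vertex_skip, HPE. unfold vertex; simpl.
    rewrite firstn_app. replace (k - length seg)%nat with 0%nat by lia. simpl. rewrite app_nil_r. reflexivity. }
  assert (Hnq : forall k, (k < n2 - j')%nat -> nth_error (plab q) (length E + k) = nth_error (plab p2) (j' + k)).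
  { intros k Hk. simpl. rewrite nth_error_app2 by lia. replace (length E + k - length E)%nat with k by lia.
    rewrite nth_error_app1 by lia. unfold seg. rewrite nth_error_skipn. reflexivity. }
  assert (HnoHL : forall k, (length E + (n2 - j') <= k)%nat -> ~ has_HL q l k).
  { intros k Hk [h Hh]. simpl in Hh. rewrite nth_error_app2 in Hh by lia.
    rewrite nth_error_app2 in Hh by lia. unfold W in Hh. rewrite nth_error_map in Hh.
    destruct (nth_error w2 _); simpl in Hh; discriminate. }
  assert (Hcyc : is_cycle X H q).
  { split.
    - unfold valid_path, q; simpl. apply Forall_app; split.
      + apply hedge_valid. apply (co_trans _ Hsub _ g); [apply co_sym|]; auto.
      + apply Forall_app; split. apply Forall_skipn'; auto.
        apply Forall_map. eapply Forall_impl; [|exact Hw2a]. simpl; auto.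
    - rewrite pend_eq. unfold q; simpl. unfold W; rewrite !eval_word_app, eval_XL, !gmulA, HPE.
      unfold seg. rewrite <- pend_split. exact Hw2c. }
  set (m := (length E + (n2 - 1 - j'))%nat).
  assert (Hvm : vertex q m = vertex p2 (n2 - 1)).
  { unfold m. rewrite Hvq by lia. f_equal. lia. }
  assert (HvSm : vertex q (S m) = vertex p2 n2).
  { replace (S m) with (length E + (n2 - j'))%nat by (unfold m; lia). rewrite Hvq by lia. f_equal. lia. }
  assert (Hplq : (plen q <= 1 + d + d)%nat).
  { unfold plen, q; simpl. rewrite !length_app, Hseg. unfold W. rewrite length_map. lia. }
  assert (Hiso : isolated H l q m (S m)).
  { split.
    - split; [lia|]. split.
      { unfold plen, q; simpl. rewrite !length_app, Hseg. unfold m. lia. }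
      split.
      { intros k Hk. replace k with m by lia. unfold has_HL, m. rewrite Hnq by lia.
        replace (j' + (n2 - 1 - j'))%nat with (n2 - 1)%nat by lia. exact HL2. }
      split.
      { right. replace (m - 1)%nat with (length E + (n2 - 2 - j'))%nat by (unfold m; lia).
        unfold has_HL. rewrite Hnq by lia. replace (j' + (n2 - 2 - j'))%nat with (n2 - 1 - 1)%nat by lia.
        destruct Hpre2 as [E2|E2]; [lia|exact E2]. }
      apply HnoHL. unfold m; lia.
    - intros i'' j'' Hcomp Hneq Hconn2.
      destruct Hconn2 as [_ [_ [g' [Hq1 Hq2]]]].
      destruct Hcomp as [Hij2 [Hjq [Hall3 _]]].
      assert (Hi''1 : (i'' < length E + (n2 - j'))%nat).
      { destruct (le_lt_dec (length E + (n2 - j')) i'') as [Hle|Hlt]; [|exact Hlt].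
        exfalso. apply (HnoHL i''); [exact Hle|]. apply Hall3. lia. }
      assert (Hi''m : (i'' < m)%nat).
      { destruct (Nat.eq_dec i'' m) as [Em|Em]; [|unfold m in *; lia].
        subst i''. destruct (Nat.eq_dec j'' (S m)) as [Ej|Ej].
        - subst j''. contradiction.
        - exfalso. apply (HnoHL (S m)); [unfold m; lia|]. apply Hall3. lia. }
      assert (HgSm : co (H l) g' (vertex p2 n2)) by (rewrite <- HvSm; apply Hq1; lia).
      assert (Hgm : co (H l) g' (vertex p2 (n2 - 1))) by (rewrite <- Hvm; apply Hq1; lia).
      assert (Hgi'' : co (H l) g' (vertex q i'')) by (apply Hq2; lia).
      destruct (le_lt_dec (length E) i'') as [HEi|HEi].
      + set (k := (i'' - length E)%nat).
        replace i'' with (length E + k)%nat in Hgi'' by (unfold k; lia).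
        rewrite Hvq in Hgi'' by (unfold k, m in *; lia).
        apply (geo_coset X H p2 l (j' + k) n2 Hsub Hg2); [unfold k, m in *; lia|lia|].
        apply (co_trans _ Hsub _ g'); [apply co_sym|]; auto.
      + assert (i'' = 0%nat) by lia. subst i''.
        rewrite vertex0 in Hgi''. simpl in Hgi''.
        apply Hnot. split; [exact Hc1|]. split; [exact Hc2|]. exists g'. split.
        * intros k Hk. fold (co (H l) g' (vertex p1 k)).
          destruct (Nat.eq_dec k n1) as [Ek|Ek].
          { subst k. exact Hgi''. }
          replace k with (n1 - 1)%nat by lia.
          apply (co_trans _ Hsub _ P); auto. apply co_sym; auto.
          unfold P, pend. fold n1. replace n1 with (S (n1 - 1)) at 2 by lia.
          apply (co_edge H X); auto; try (apply Hall1; lia).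
        * intros k Hk. fold (co (H l) g' (vertex p2 k)).
          destruct (Nat.eq_dec k n2) as [Ek|Ek].
          { subst k. exact HgSm. }
          replace k with (n2 - 1)%nat by lia. exact Hgm. }
  pose proof (HLprop q l [(m, S m)] Hcyc) as HLq.
  assert (Hsum : sum_dX X q [(m, S m)] <= L * INR (plen q)).
  { apply HLq. constructor; [simpl; tauto|constructor].
    intros c [Ec|[]]. subst c. exact Hiso. }
  unfold sum_dX in Hsum. simpl in Hsum. rewrite Hvm, HvSm in Hsum.
  assert (Hq : INR (plen q) <= 1 + 2 * s).
  { apply le_INR in Hplq. rewrite !plus_INR in Hplq. simpl in Hplq. lra. }
  assert (L * INR (plen q) <= L * (1 + 2 * s)) by (apply Rmult_le_compat_l; lra).
  pose proof (Rmax_r eps (2 * L * (s + 1))).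
  fold n2 in Hd2. nra.
Qed.
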